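(* Let $\ell\geq 1$ and let $G\subseteq\mathcal{G}_\Sigma^\ell$ be a non-empty finite set of generalized strings of length $\ell$. Then $\mathrm{NFA}(G)$ is a simple NFA.
   Context: For a finite alphabet $\Sigma$, $\mathcal{G}_\Sigma=\mathcal{P}(\Sigma)\setminus\{\emptyset\}$ and a generalized string is a finite string $g=g[1]\cdots g[|g|]$ over $\mathcal{G}_\Sigma$; $\mathcal{G}_\Sigma^\ell$ is the set of generalized strings of length $\ell$. Construction of $\mathrm{NFA}(G)$: let $\bar Q=\mathcal{P}(G)\times\{0,\dots,\ell\}$ and define $\mathrm{Parent}:\bar Q\times\Sigma\to\bar Q\cup\{\bot\}$ by $\mathrm{Parent}((H,k),\sigma)=(\{h\in H:\sigma\in h[k]\},k-1)$ if $k>0$ and $\bot$ if $k=0$. Set $Q_\ell=\{(G,\ell)\}$ and, for $i=\ell-1,\dots,0$, $Q_i=\{(H,i): H\subseteq G,\ H\neq\emptyset,\ \exists q\in Q_{i+1},\sigma\in\Sigma \text{ with } \mathrm{Parent}(q,\sigma)=(H,i)\}$. Let $Q=Q_0\cup\dots\cup Q_\ell$, $\Delta((H,k),\sigma)=\{q\in Q_{k+1}:\mathrm{Parent}(q,\sigma)=(H,k)\}$ if $k<\ell$ and $\emptyset$ if $k=\ell$, $Q_\alpha=Q_0$, $F=Q_\ell$. Then $\mathrm{NFA}(G)=(Q,\Sigma,\Delta,Q_\alpha,F)$. For an NFA, $\hat\Delta$ is the extension of $\Delta$ to strings ($\hat\Delta(q,\varepsilon)=\{q\}$, $\hat\Delta(q,\sigma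 s)=\bigcup_{p\in\Delta(q,\sigma)}\hat\Delta(p,s)$), the language of a state is $\mathcal{L}(q)=\{s\in\Sigma^*:\hat\Delta(q,s)\cap F\neq\emptyset\}$, and a state $q$ is accessible if $q\in\hat\Delta(q_\alpha,s)$ for some $q_\alpha\in Q_\alpha$, $s\in\Sigma^*$. An NFA is called simple if all its states are accessible and the languages $\mathcal{L}(q)$, $q\in Q$, are non-empty and pairwise disjoint. *)

(* Defs.v *)
From mathcomp Require Import all_boot.
Set Implicit Arguments. Unset Strict Implicit. Unset Printing Implicit Defensive.

Record nfa (S Sigma : finType) := NFA {
  states : {set S};
  delta  : S -> Sigma -> {set S};
  starts : {set S};
  finals : {set S} }.

Section NFA.
Variables (S Sigma : finType) (A : nfa S Sigma).

Fixpoint delta_hat (q : S) (s : seq Sigma) : {set S} :=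
  match s with
  | [::] => [set q]
  | a :: s' => \bigcup_(p in delta A q a) delta_hat p s'
  end.

Definition lang (q : S) (s : seq Sigma) : bool :=
  delta_hat q s :&: finals A != set0.

Definition accessible (q : S) : Prop :=
  exists qa s, qa \in starts A /\ q \in delta_hat qa s.

Definition simple_nfa : Prop :=
  (forall q, q \in states A -> accessible q) /\
  (forall q, q \in states A -> exists s, lang q s) /\
  (forall q q', q \in states A -> q' \in states A -> q != q' ->
     forall s, ~~ (lang q s && lang q' s)).
End NFA.

Section Construction.
Variables (Sigma : finType) (l : nat).

(* generalized strings of length l: l-tuples of subsets of Sigma
   (non-emptiness of letters is imposed as a hypothesis on G) *)
Definition gstr := (l.-tuple {set Sigma})%type.

(* 1-based letter access: g[k] *)
Definition gchar (g : gstr) (k : nat) : {set Sigma} := nth set0 g k.-1.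

(* carrier of states: P(G) x {0..l} (subsets of all gstr; Q only uses subsets of G) *)
Definition gstate := ({set gstr} * 'I_l.+1)%type.

Definition parentH (H : {set gstr}) (k : nat) (a : Sigma) : {set gstr} :=
  [set h in H | a \in gchar h k].

Definition Parent (q : gstate) (a : Sigma) : option gstate :=
  match val q.2 with
  | 0 => None
  | k.+1 => Some (parentH q.1 k.+1 a, inord k)
  end.

Variable G : {set gstr}.

(* Qd d = the first components of Q_{l-d} *)
Fixpoint Qd (d : nat) : {set {set gstr}} :=
  match d with
  | 0 => [set G]
  | d'.+1 => [set H | (H != set0) && (H \subset G) &&
               [exists H' in Qd d', exists a, parentH H' (l - d') a == H]]
  end.

Definition Qset : {set gstate} := [set q : gstate | q.1 \in Qd (l - q.2)].

Definition Qlevel (i : nat) : {set gstate} := [set q in Qset | val q.2 == i].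

Definition Delta (q : gstate) (a : Sigma) : {set gstate} :=
  if val q.2 < l then [set p in Qlevel (val q.2).+1 | Parent p a == Some q]
  else set0.

Definition NFA_of : nfa gstate Sigma := NFA Qset Delta (Qlevel 0) (Qlevel l).
End Construction.

(* Main.v *)
Require Import Defs.
From mathcomp Require Import all_boot.
Set Implicit Arguments. Unset Strict Implicit. Unset Printing Implicit Defensive.

Section Proofs.
Variables (Sigma : finType) (l : nat) (G : {set gstr Sigma l}).

Fixpoint back (p : gstate Sigma l) (s : seq Sigma) : option (gstate Sigma l) :=
  match s with
  | [::] => Some p
  | a :: s' => obind (fun p1 => Parent p1 a) (back p s')
  end.

Lemma back_spec s : forall q p, p \in delta_hat (NFA_of G) q s -> back p s = Some q.
Proof.
elim: s => [|a s IH] q p /=.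
  by rewrite inE => /eqP ->.
case/bigcupP => p1 Hp1 Hp; rewrite (IH _ _ Hp) /=.
move: Hp1; rewrite /Delta; case: ifP => _; last by rewrite inE.
by rewrite inE => /andP [_ /eqP].
Qed.

Lemma Parent_eq (p : gstate Sigma l) a k : val p.2 = k.+1 ->
  Parent p a = Some (parentH p.1 k.+1 a, inord k).
Proof. by rewrite /Parent => ->. Qed.

Lemma Qlevel_l q : q \in Qlevel G l -> q = (G, ord_max).
Proof.
rewrite !inE => /andP [Hq /eqP Hl].
have E : q.2 = ord_max by apply: val_inj.
move: Hq; rewrite Hl subnn inE => /eqP H1.
by move: H1 E; clear; case: q => ? ? /= -> ->.
Qed.

Lemma final_in : (G, ord_max) \in Qlevel G l.
Proof. by rewrite !inE /= subnn /= inE !eqxx. Qed.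

Lemma delta_hat_rcons s : forall q p p' a, p \in delta_hat (NFA_of G) q s ->
  p' \in Delta G p a -> p' \in delta_hat (NFA_of G) q (rcons s a).
Proof.
elim: s => [|b s IH] q p p' a /=.
  rewrite inE => /eqP -> Hp'; apply/bigcupP; exists p' => //; by rewrite inE.
case/bigcupP => p1 Hp1 Hp Hp'; apply/bigcupP; exists p1 => //.
exact: IH Hp Hp'.
Qed.

Hypothesis G0 : G != set0.

Lemma Qd_prop d H : H \in Qd G d -> H != set0 /\ H \subset G.
Proof.
case: d => [|d] /=; first by rewrite inE => /eqP ->.
by rewrite inE => /andP [/andP [-> ->] _].
Qed.

Lemma lang_ne d : forall q : gstate Sigma l, q.1 \in Qd G d -> val q.2 = l - d -> d <= l ->
  exists s, (G, ord_max) \in delta_hat (NFA_of G) q s.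
Proof.
elim: d => [|d IH] q Hq Hv Hd.
  exists [::] => /=; rewrite inE; apply/eqP.
  move: Hq; rewrite /= inE => /eqP H1.
  have E : q.2 = ord_max by apply: val_inj; rewrite Hv subn0.
  by case: q H1 E {Hv} => ? ? /= -> ->.
move: Hq; rewrite /= inE => /andP [_ /existsP [H' /andP [HH' /existsP [a /eqP Ha]]]].
have Hld : l - d < l.+1 by rewrite ltnS leq_subr.
pose p : gstate Sigma l := (H', Ordinal Hld).
have [s Hs] := IH p HH' erefl (ltnW Hd).
exists (a :: s) => /=; apply/bigcupP; exists p => //.
have Hv' : l - d = (val q.2).+1 by rewrite Hv subnSK.
rewrite /Delta ifT; last by rewrite Hv subnS -ltnS prednK ?subn_gt0 // ltnS leq_subr.
rewrite !inE /= subKn ?(ltnW Hd) // HH' Hv' eqxx /=.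
rewrite (@Parent_eq p a (val q.2)) //= -Hv' Ha.
apply/eqP; move: Hv; clear; case: q => /= ? i _; by rewrite inord_val.
Qed.

Hypothesis Gne : forall g, g \in G -> set0 \notin (g : seq {set Sigma}).

Lemma access i : forall q : gstate Sigma l, q \in Qset G -> val q.2 = i ->
  exists qa s, qa \in Qlevel G 0 /\ q \in delta_hat (NFA_of G) qa s.
Proof.
elim: i => [|i IH] q Hq Hi.
  exists q, [::]; split; first by rewrite inE Hq Hi.
  by rewrite /= inE.
have Hil : i < l by rewrite -ltnS -Hi ltn_ord.
move: (Hq); rewrite inE => HQ.
have [/set0Pn [g Hg] HG] := Qd_prop HQ.
have Hgs : gchar g i.+1 != set0.
  apply: contraNneq (Gne (subsetP HG _ Hg)) => <-.
  by rewrite /gchar /= mem_nth // size_tuple.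
case/set0Pn: Hgs => a Ha.
pose H0 := parentH q.1 i.+1 a.
have Hil1 : i < l.+1 by rewrite ltnW.
pose q0 : gstate Sigma l := (H0, Ordinal Hil1).
have Hq0 : q0 \in Qset G.
  rewrite inE /= -[l - i](@prednK) ?subn_gt0 //= inE.
  have -> : H0 != set0 by apply/set0Pn; exists g; rewrite inE Hg.
  rewrite /=; apply/andP; split.
    apply: subset_trans HG; apply/subsetP => x; rewrite inE; by case/andP.
  apply/existsP; exists q.1; apply/andP; split.
    by move: HQ; rewrite Hi subnS.
  apply/existsP; exists a.
  by rewrite -subnS subKn.
have [qa [s [Hqa Hs]]] := IH q0 Hq0 erefl.
exists qa, (rcons s a); split => //.
apply: delta_hat_rcons Hs _.
rewrite /Delta /= Hil inE inE Hq Hi eqxx /=.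
rewrite (@Parent_eq q a i) //; apply/eqP; congr Some; congr (_, _).
by apply: val_inj; rewrite /= inordK.
Qed.

End Proofs.

Theorem mainTheorem6 (Sigma : finType) (l : nat) (G : {set gstr Sigma l}) :
  1 <= l -> G != set0 -> (forall g, g \in G -> set0 \notin (g : seq {set Sigma})) ->
  simple_nfa (NFA_of G).
Proof.
move=> l1 G0 Gne; split; [|split].
- move=> q Hq; have [qa [s [H1 H2]]] := access G0 Gne Hq erefl.
  by exists qa, s.
- move=> q Hq; move: (Hq); rewrite inE => HQ.
  have [s Hs] := lang_ne HQ (esym (subKn (leq_ord q.2))) (leq_subr _ _).
  exists s; rewrite /lang; apply/set0Pn; exists (G, ord_max).
  by rewrite inE Hs final_in.
- move=> q q' _ _ Hne s; apply/negP => /andP [].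
  rewrite /lang => /set0Pn [x]; rewrite inE => /andP [Hx Fx].
  move=> /set0Pn [y]; rewrite inE => /andP [Hy Fy].
  have Ex := Qlevel_l Fx; have Ey := Qlevel_l Fy.
  move: (back_spec Hx) (back_spec Hy); rewrite Ex -Ey => -> [] E.
  by move: Hne; rewrite E eqxx.
Qed.
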